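(* Let $\mathcal{F}=(\{F_i\}_{i\in\mathscr V},\{F_k\}_{k\in\mathscr E})$ be a factorization inverse system of fields with inverse limit $F$, and let $E=F[X]/(f)$ be a finite separable field extension, $f\in F[X]$ monic irreducible. For $i\in\mathscr V$ (resp. $k\in\mathscr E$) let $f=\prod_{i'\in\mathscr V_i}f_{i'}$ (resp. $f=\prod_{k'\in\mathscr E_k}f_{k'}$) be the factorization into monic irreducibles in $F_i[X]$ (resp. $F_k[X]$), and set $E_{i'}=F_i[X]/(f_{i'})$, $E_{k'}=F_k[X]/(f_{k'})$. Let $\Gamma'=(\mathscr V',\mathscr E')$ with $\mathscr V'=\bigsqcup_i\mathscr V_i$, $\mathscr E'=\bigsqcup_k\mathscr E_k$, where $k'\in\mathscr E_k$ is incident to $i'\in\mathscr V_i$ iff $k$ is incident to $i$ and $f_{k'}$ divides $f_{i'}$ in $F_k[X]$ (giving an inclusion $E_{i'}\hookrightarrow E_{k'}$ extending $F_i\hookrightarrow F_k$), oriented so that $l(k')\in\mathscr V_{l(k)}$ and $r(k')\in\mathscr V_{r(k)}$. Then $\mathcal E=(\{E_{i'}\}_{i'\in\mathscr V'},\{E_{k'}\}_{k'\in\mathscr E'})$ is a factorization inverse system of fields with inverse limit $E$. If patching for finite-dimensional vector spaces holds over $\mathcal F$, then it holds over $\mathcal E$.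
   Context: A factorization inverse system of fields $\mathcal{F}=(\{F_i\}_{i\in\mathscr V},\{F_k\}_{k\in\mathscr E})$ consists of a finite nonempty graph $\Gamma=(\mathscr V,\mathscr E)$ (multiple edges allowed, no loops), fields $F_i$ ($i\in\mathscr V$), $F_k$ ($k\in\mathscr E$), and field inclusions $F_i\hookrightarrow F_k$ whenever edge $k$ is incident to vertex $i$, such that the inverse limit in commutative rings is a field $F$ (i.e. $F\to\prod_iF_i\rightrightarrows\prod_kF_k$ is an equalizer). The graph is oriented: each edge $k$ has a head $l(k)$ and a tail $r(k)$. Patching for finite-dimensional vector spaces holds over $\mathcal{F}$ if for every $n\ge1$ and every $(g_k)_{k}\in\prod_{k\in\mathscr E}\mathrm{GL}_n(F_k)$ there exists $(g'_i)_i\in\prod_{i\in\mathscr V}\mathrm{GL}_n(F_i)$ with $g_k=(g'_{r(k)})^{-1}g'_{l(k)}$ for all $k$. *)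

(* Defs.v *)
From HB Require Import structures.
From mathcomp Require Import all_boot all_order all_algebra all_field.
Set Implicit Arguments. Unset Strict Implicit. Unset Printing Implicit Defensive.
Import GRing.Theory.
Local Open Scope ring_scope.

(* An oriented finite graph: vertices V, edges Ed, head l and tail r.
   Each edge k is incident exactly to l k and r k. *)

Definition is_inverse_limit (V Ed : finType) (l r : Ed -> V)
  (FV : V -> fieldType) (FE : Ed -> fieldType)
  (jl : forall k, {rmorphism FV (l k) -> FE k})
  (jr : forall k, {rmorphism FV (r k) -> FE k})
  (F : fieldType) (phi : forall i, {rmorphism F -> FV i}) : Prop :=
  [/\ (forall k x, jl k (phi (l k) x) = jr k (phi (r k) x)),
      (forall x y : F, (forall i, phi i x = phi i y) -> x = y) &
      (forall a : forall i, FV i,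
          (forall k, jl k (a (l k)) = jr k (a (r k))) ->
          exists x : F, forall i, phi i x = a i)].

Definition is_FIS (V Ed : finType) (l r : Ed -> V)
  (FV : V -> fieldType) (FE : Ed -> fieldType)
  (jl : forall k, {rmorphism FV (l k) -> FE k})
  (jr : forall k, {rmorphism FV (r k) -> FE k})
  (F : fieldType) (phi : forall i, {rmorphism F -> FV i}) : Prop :=
  [/\ (0 < #|V|)%N, (forall k, l k != r k) &
      is_inverse_limit jl jr phi].

Definition patching (V Ed : finType) (l r : Ed -> V)
  (FV : V -> fieldType) (FE : Ed -> fieldType)
  (jl : forall k, {rmorphism FV (l k) -> FE k})
  (jr : forall k, {rmorphism FV (r k) -> FE k}) : Prop :=
  forall n : nat, (0 < n)%N ->
  forall g : forall k, 'M[FE k]_n, (forall k, g k \in unitmx) ->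
  exists g' : forall i, 'M[FV i]_n,
    (forall i, g' i \in unitmx) /\
    (forall k, g k = invmx (map_mx (jr k) (g' (r k))) *m map_mx (jl k) (g' (l k))).

(* L together with iota : K -> L and t : L is (a presentation of) K[X]/(p):
   the K-algebra map K[X] -> L, X |-> t, is surjective with kernel (p). *)
Definition presents (K L : fieldType) (iota : {rmorphism K -> L}) (t : L)
  (p : {poly K}) : Prop :=
  (forall y : L, exists q : {poly K}, y = (map_poly iota q).[t]) /\
  (forall q : {poly K}, (map_poly iota q).[t] = 0 <-> p %| q).

(* Main.v *)
Require Import Defs.
From HB Require Import structures.
From mathcomp Require Import all_boot all_order all_algebra all_field.
From mathcomp Require Import ring.
Set Implicit Arguments. Unset Strict Implicit. Unset Printing Implicit Defensive.
Import GRing.Theory.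
Local Open Scope ring_scope.

Section PolyAux.
Variable R : fieldType.
Implicit Types p q x y : {poly R}.

Lemma modp_congr p x y : p %| x - y -> x %% p = y %% p.
Proof.
move=> h; have -> : x = (x - y) + y by rewrite subrK.
by rewrite modpD (modp_eq0 h) add0r.
Qed.

Lemma dvdp_prod_sep (I : eqType) (s : seq I) (r : I -> {poly R}) x :
  separable_poly (\prod_(i <- s) r i) -> (forall i, i \in s -> r i %| x) ->
  \prod_(i <- s) r i %| x.
Proof.
elim: s => [|a s IH]; first by rewrite big_nil dvd1p.
rewrite big_cons separable_mul => /and3P[_ sP cop] h.
rewrite Gauss_dvdp // h ?mem_head //= IH // => i hi; apply: h.
by rewrite in_cons hi orbT.
Qed.

Lemma crt_sep (I : eqType) (s : seq I) (r : I -> {poly R}) (y : I -> {poly R}) :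
  separable_poly (\prod_(i <- s) r i) ->
  exists z, forall i, i \in s -> r i %| z - y i.
Proof.
elim: s => [|a s IH]; first by exists 0.
rewrite big_cons separable_mul => /and3P[_ sP cop].
have [z hz] := IH sP.
have [[u1 u2] /= e] := Bezout_eq1_coprimepP _ _ cop.
set P := \prod_(i <- s) r i in e hz cop sP *.
exists (y a * (u2 * P) + z * (u1 * r a)) => i; rewrite in_cons => /orP[/eqP->|hi].
  have -> : y a * (u2 * P) + z * (u1 * r a) - y a = (z - y a) * u1 * r a.
    have -> : u2 * P = 1 - u1 * r a by rewrite -e; ring.
    ring.
  exact: dvdp_mull.
have hP : r i %| P.
  by rewrite /P (big_rem i hi) /=; apply: dvdp_mulr.
have -> : y a * (u2 * P) + z * (u1 * r a) - y i =
   (z - y i) + (y a - z) * u2 * P.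
  have -> : u1 * r a = 1 - u2 * P by rewrite -e; ring.
  ring.
by rewrite dvdp_add // ?(hz i hi) // dvdp_mull.
Qed.

Lemma irr_dvd_prod (I : eqType) (s : seq I) (r : I -> {poly R}) q :
  irreducible_poly q -> q %| \prod_(i <- s) r i -> exists2 i, i \in s & q %| r i.
Proof.
move=> irr; elim: s => [|a s IH].
  rewrite big_nil dvdp1 => /eqP h; case: irr; by rewrite h.
rewrite big_cons; have [h|h] := boolP (q %| r a).
  by exists a; rewrite ?mem_head.
move=> hd; have cop : coprimep q (r a) by rewrite irreducible_poly_coprime.
rewrite Gauss_dvdpr // in hd; have [i hi hq] := IH hd.
by exists i; rewrite // in_cons hi orbT.
Qed.

Lemma uniq_dvd_prod (I : finType) (r : I -> {poly R}) q i j :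
  separable_poly (\prod_i r i) -> (1 < size q)%N -> q %| r i -> q %| r j -> i = j.
Proof.
move=> sp sq hi hj; apply/eqP; apply: contraTT isT => nij.
have : r i * r j %| \prod_k r k.
  rewrite (bigD1 i) //= (bigD1 j) //= 1?eq_sym // mulrA; exact: dvdp_mulr.
move/(separable_coprime sp) => cop.
have c2 : coprimep (r j) q by apply: (coprimep_dvdl hi); rewrite coprimep_sym.
have : coprimep q q by apply: (coprimep_dvdl hj); rewrite coprimep_sym.
by rewrite coprimepp => /eqP h; rewrite h in sq.
Qed.

Lemma dvdp_sum (I : Type) (s : seq I) (P : pred I) (F : I -> {poly R}) q :
  (forall i, P i -> q %| F i) -> q %| \sum_(i <- s | P i) F i.
Proof.
move=> h; apply: (big_ind (fun x => q %| x)); [exact: dvdp0 | | exact: h].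
by move=> x y; apply: dvdp_add.
Qed.

End PolyAux.

Lemma horner_modp (R K : fieldType) (i : {rmorphism R -> K}) (t : K) (p x : {poly R}) :
  (map_poly i p).[t] = 0 -> (map_poly i (x %% p)).[t] = (map_poly i x).[t].
Proof.
move=> h; rewrite {2}(divp_eq x p) rmorphD rmorphM /= hornerD hornerM h mulr0.
by rewrite add0r.
Qed.

Section Lift.
Variables (K L M : fieldType) (iota : {rmorphism K -> L}) (theta : L)
  (sigma : {rmorphism K -> M}) (mu : M)
  (hs : forall y : L, exists q : {poly K}, y == (map_poly iota q).[theta])
  (hk : forall q, (map_poly iota q).[theta] = 0 -> (map_poly sigma q).[mu] = 0).

Definition liftf (y : L) : M := let _ := hk in (map_poly sigma (xchoose (hs y))).[mu].

Lemma liftf_eval q : liftf ((map_poly iota q).[theta]) = (map_poly sigma q).[mu].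
Proof.
rewrite /liftf /=; set y := (map_poly iota q).[theta].
have /eqP e := xchooseP (hs y); set q' := xchoose (hs y) in e *.
apply/eqP; rewrite -subr_eq0 -hornerN -hornerD -rmorphN -rmorphD; apply/eqP.
by apply: hk; rewrite rmorphD rmorphN hornerD hornerN -e subrr.
Qed.

Lemma liftf_ex y : exists q, y = (map_poly iota q).[theta].
Proof. by have [q /eqP e] := hs y; exists q. Qed.

Lemma liftf_nmod : (liftf 0 = 0) * {morph liftf : x y / x + y}.
Proof.
split.
  by have := liftf_eval 0; rewrite !rmorph0 !horner0.
move=> x y; have [qx ->] := liftf_ex x; have [qy ->] := liftf_ex y.
by rewrite -hornerD -rmorphD !liftf_eval rmorphD hornerD.
Qed.

Lemma liftf_monoid : GRing.monoid_morphism liftf.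
Proof.
split.
  by have := liftf_eval 1; rewrite !rmorph1 !hornerC.
move=> x y; have [qx ->] := liftf_ex x; have [qy ->] := liftf_ex y.
by rewrite -hornerM -rmorphM !liftf_eval rmorphM hornerM.
Qed.

HB.instance Definition _ := GRing.isNmodMorphism.Build L M liftf liftf_nmod.
HB.instance Definition _ := GRing.isMonoidMorphism.Build L M liftf liftf_monoid.

End Lift.

Lemma lift_ex (K L M : fieldType) (iota : {rmorphism K -> L}) (theta : L) (p : {poly K})
  (H : presents iota theta p) (sigma : {rmorphism K -> M}) (mu : M)
  (hmu : (map_poly sigma p).[mu] = 0) :
  exists kap : {rmorphism L -> M},
    (forall x, kap (iota x) = sigma x) /\ kap theta = mu /\
    (forall q, kap ((map_poly iota q).[theta]) = (map_poly sigma q).[mu]).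
Proof.
case: H => hsur hker.
have hs : forall y : L, exists q : {poly K}, y == (map_poly iota q).[theta].
  by move=> y; have [q e] := hsur y; exists q; apply/eqP.
have hk : forall q, (map_poly iota q).[theta] = 0 -> (map_poly sigma q).[mu] = 0.
  move=> q /hker /dvdpP [r ->]; by rewrite rmorphM hornerM hmu mulr0.
exists (@liftf K L M iota theta sigma mu hs hk); split; last split.
- move=> x; have := @liftf_eval K L M iota theta sigma mu hs hk x%:P; by rewrite !map_polyC !hornerC.
- have := @liftf_eval K L M iota theta sigma mu hs hk 'X; by rewrite !map_polyX !hornerX.
- exact: liftf_eval.
Qed.

Lemma lift_sig (K L M : fieldType) (iota : {rmorphism K -> L}) (theta : L) (p : {poly K})
  (H : presents iota theta p) (sigma : {rmorphism K -> M}) (mu : M)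
  (hmu : (map_poly sigma p).[mu] = 0) :
  {kap : {rmorphism L -> M} |
    (forall x, kap (iota x) = sigma x) /\ kap theta = mu /\
    (forall q, kap ((map_poly iota q).[theta]) = (map_poly sigma q).[mu])}.
Proof.
have hs : forall y : L, exists q : {poly K}, y == (map_poly iota q).[theta].
  by case: H => hsur _ y; have [q e] := hsur y; exists q; apply/eqP.
have hk : forall q, (map_poly iota q).[theta] = 0 -> (map_poly sigma q).[mu] = 0.
  case: H => _ hker.
  move=> q /hker /dvdpP [r ->]; by rewrite rmorphM hornerM hmu mulr0.
exists (@liftf K L M iota theta sigma mu hs hk); split; last split.
- move=> x; have := @liftf_eval K L M iota theta sigma mu hs hk x%:P; by rewrite !map_polyC !hornerC.
- have := @liftf_eval K L M iota theta sigma mu hs hk 'X; by rewrite !map_polyX !hornerX.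
- exact: liftf_eval.
Qed.

Lemma mx_rV_eq (R : pzRingType) k m (A B : 'M[R]_(k, m)) :
  (forall u : 'rV_k, u *m A = u *m B) -> A = B.
Proof. by move=> h; apply/row_matrixP => i; rewrite !rowE h. Qed.

Section GQ.
Variables (R : fieldType) (p : {poly R}) (n d : nat).
Hypothesis hp : size p = d.+1.
Implicit Types (Q : 'M[{poly R}]_n) (M : 'M[R]_(n, d)).

Definition pirow (M : 'M[R]_(n, d)) (t : 'I_n) : {poly R} := rVpoly (row t M).

Definition mulQ (Q : 'M[{poly R}]_n) (M : 'M[R]_(n, d)) : 'M[R]_(n, d) :=
  \matrix_(s < n) poly_rV ((\sum_t pirow M t * Q t s) %% p).

Lemma p_neq0 : p != 0.
Proof. by rewrite -size_poly_eq0 hp. Qed.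

Lemma size_pirow M t : (size (pirow M t) <= d)%N.
Proof. exact: size_poly. Qed.

Lemma size_modp (x : {poly R}) : (size (modp x p) <= d)%N.
Proof. by have := ltn_modpN0 x p_neq0; rewrite hp. Qed.

Lemma pirow_mulQ Q M s : pirow (mulQ Q M) s = (\sum_t pirow M t * Q t s) %% p.
Proof. by rewrite /pirow /mulQ rowK poly_rV_K // size_modp. Qed.

Lemma pirow_ext M M' : (forall s, pirow M s = pirow M' s) -> M = M'.
Proof.
move=> h; apply/row_matrixP => s.
by rewrite -(rVpolyK (row s M)) -(rVpolyK (row s M')) -/(pirow M s) h.
Qed.

Lemma pirowD M M' s : pirow (M + M') s = pirow M s + pirow M' s.
Proof. by rewrite /pirow linearD /= linearD. Qed.

Lemma pirowZ a M s : pirow (a *: M) s = a *: pirow M s.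
Proof. by rewrite /pirow linearZ /= linearZ. Qed.

Lemma mulQ_lin Q : semilinear (mulQ Q).
Proof.
split.
  move=> a M; apply/row_matrixP => s; rewrite linearZ /= !rowK -linearZ /=.
  rewrite -modpZl scaler_sumr; congr (poly_rV (_ %% _)).
  by apply: eq_bigr => t _; rewrite pirowZ scalerAl.
move=> M M'; apply/row_matrixP => s; rewrite linearD /= !rowK -linearD /=.
rewrite -modpD -big_split; congr (poly_rV (_ %% _)).
by apply: eq_bigr => t _; rewrite pirowD mulrDl.
Qed.

HB.instance Definition _ Q := GRing.isSemilinear.Build R 'M[R]_(n, d) 'M[R]_(n, d) _
  (mulQ Q) (mulQ_lin Q).

Definition GQ Q : 'M[R]_(n * d) := lin_mx (mulQ Q).

Lemma mul_GQ Q M : mxvec M *m GQ Q = mxvec (mulQ Q M).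
Proof. exact: mul_vec_lin. Qed.

Lemma mul_GQ' Q u : vec_mx (u *m GQ Q) = mulQ Q (vec_mx u).
Proof. by rewrite -{1}(vec_mxK u) mul_GQ mxvecK. Qed.

Lemma GQ_ext Q Q' : (forall M, mulQ Q M = mulQ Q' M) -> GQ Q = GQ Q'.
Proof.
move=> h; apply: mx_rV_eq => u; rewrite -(vec_mxK u) !mul_GQ; by rewrite h.
Qed.

Lemma modp_sum_mul (I : finType) (X Y : I -> {poly R}) :
  (\sum_i (X i %% p) * Y i) %% p = (\sum_i X i * Y i) %% p.
Proof.
apply: modp_congr; rewrite -sumrB; apply: dvdp_sum => i _.
rewrite -mulrBl; apply: dvdp_mulr.
have -> : X i %% p - X i = - (X i %/ p) * p.
  rewrite [X in _ - X](divp_eq (X i) p); ring.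
exact: dvdp_mull.
Qed.

Lemma mulQ_mul Q Q' M : mulQ Q' (mulQ Q M) = mulQ (Q *m Q') M.
Proof.
apply: pirow_ext => u; rewrite !pirow_mulQ.
under eq_bigr do rewrite pirow_mulQ.
rewrite modp_sum_mul; congr (_ %% _).
under eq_bigr do rewrite mulr_suml.
rewrite exchange_big /=; apply: eq_bigr => t _.
by rewrite mxE mulr_sumr; apply: eq_bigr => s _; rewrite mulrA.
Qed.

Lemma GQ_mul Q Q' : GQ Q *m GQ Q' = GQ (Q *m Q').
Proof.
apply: mx_rV_eq => u; rewrite -(vec_mxK u) mulmxA !mul_GQ.
by rewrite mulQ_mul.
Qed.

Lemma mulQ_scal c M : mulQ ((c%:P)%:M) M = c *: M.
Proof.
apply: pirow_ext => s; rewrite pirow_mulQ pirowZ (bigD1 s) //= big1.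
  rewrite addr0 mxE eqxx mulr1n mulrC mul_polyC modp_small //.
  by rewrite (leq_ltn_trans (size_scale_leq _ _)) // hp ltnS size_pirow.
by move=> t /negPf ne; rewrite mxE ne mulr0n mulr0.
Qed.

Lemma GQ_scal c : GQ ((c%:P)%:M) = c%:M.
Proof.
apply: mx_rV_eq => u; rewrite -(vec_mxK u) mul_GQ mulQ_scal.
by rewrite mul_mx_scalar linearZ.
Qed.

Lemma GQ1 : GQ 1%:M = 1%:M.
Proof. by rewrite -GQ_scal. Qed.

Lemma mulQD Q Q' M : mulQ (Q + Q') M = mulQ Q M + mulQ Q' M.
Proof.
apply: pirow_ext => s; rewrite pirowD !pirow_mulQ -modpD -big_split.
by congr (_ %% _); apply: eq_bigr => t _; rewrite mxE mulrDr.
Qed.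

Lemma GQD Q Q' : GQ (Q + Q') = GQ Q + GQ Q'.
Proof.
apply: mx_rV_eq => u; rewrite -(vec_mxK u) mulmxDr !mul_GQ mulQD.
by rewrite linearD.
Qed.

Lemma GQ_mod Q Q' : (forall t s, p %| Q t s - Q' t s) -> GQ Q = GQ Q'.
Proof.
move=> h; apply: GQ_ext => M; apply: pirow_ext => s; rewrite !pirow_mulQ.
apply: modp_congr; rewrite -sumrB; apply: dvdp_sum => t _.
by rewrite -mulrBr dvdp_mull.
Qed.

Definition Tm := GQ ('X%:M).

Lemma Tm_comm Q : Tm *m GQ Q = GQ Q *m Tm.
Proof. by rewrite /Tm !GQ_mul scalar_mxC. Qed.

Lemma pirow_delta (t s : 'I_n) (j : 'I_d) :
  pirow (delta_mx t j) s = (s == t)%:R *: 'X^j.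
Proof.
rewrite /pirow.
have -> : row s (delta_mx t j : 'M[R]_(n, d)) = (s == t)%:R *: delta_mx 0 j.
  apply/rowP => k; rewrite !mxE; case: eqP => _; case: eqP => _;
    by rewrite ?mulr1 ?mulr0 ?mul1r ?mul0r.
by rewrite linearZ /= rVpoly_delta.
Qed.

Lemma mulQX_delta (t : 'I_n) (j j' : 'I_d) : val j' = (val j).+1 ->
  mulQ ('X%:M) (delta_mx t j) = delta_mx t j'.
Proof.
move=> e; apply: pirow_ext => s; rewrite pirow_mulQ (bigD1 s) //= big1.
  rewrite addr0 mxE eqxx mulr1n !pirow_delta -scalerAl -exprSr e modpZl.
  by rewrite modp_small // size_polyXn hp ltnS -e ltn_ord.
by move=> u ne; rewrite mxE (negPf ne) mulr0n mulr0.
Qed.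

End GQ.

Section GQmap.
Variables (R R' : fieldType) (sig : {rmorphism R -> R'}) (p : {poly R}) (n d : nat).

Lemma map_mulQ (Q : 'M[{poly R}]_n) (M : 'M[R]_(n, d)) :
  map_mx sig (mulQ p Q M) =
  mulQ (map_poly sig p) (map_mx (map_poly sig) Q) (map_mx sig M).
Proof.
apply/row_matrixP => s; rewrite -map_row /mulQ !rowK.
apply/rowP => j; rewrite !mxE -coef_map map_modp rmorph_sum.
congr ((_ %% _)`_ j); apply: eq_bigr => t _; rewrite rmorphM /= /pirow map_rVpoly.
by rewrite map_row mxE.
Qed.

Lemma map_GQ (Q : 'M[{poly R}]_n) :
  map_mx sig (GQ p d Q) = GQ (map_poly sig p) d (map_mx (map_poly sig) Q).
Proof.
apply: map_lin1_mx => v /=; rewrite map_mxvec map_mulQ map_vec_mx //.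
Qed.

Lemma map_Tm : map_mx sig (Tm p n d) = Tm (map_poly sig p) n d.
Proof.
rewrite /Tm map_GQ; congr GQ; apply/matrixP => i j; rewrite !mxE.
by rewrite rmorphMn /= map_polyX.
Qed.

End GQmap.

Lemma horner_Tm (R : fieldType) (p : {poly R}) n' d' (q : {poly R}) :
  size p = d'.+2 ->
  horner_mx (Tm p n'.+1 d'.+1) q = GQ p d'.+1 (q%:M : 'M_n'.+1).
Proof.
move=> hp; elim/poly_ind: q => [|q c IH].
  rewrite rmorph0 -polyC0 GQ_scal //; apply/matrixP => i j; by rewrite !mxE mul0rn.
rewrite rmorphD rmorphM /= horner_mx_X horner_mx_C IH.
transitivity (GQ p d'.+1 q%:M *m GQ p d'.+1 ('X%:M) + GQ p d'.+1 ((c%:P)%:M : 'M_n'.+1)).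
  by rewrite GQ_scal //.
rewrite GQ_mul.
transitivity (GQ p d'.+1 (q%:M *m 'X%:M + (c%:P)%:M : 'M_n'.+1)); first by rewrite GQD.
f_equal; rewrite -scalar_mxM.
  by apply/matrixP => i j; rewrite !mxE -mulrnDl.
exact: hp.
Qed.

Section EV.
Variables (R K : fieldType) (io : {rmorphism R -> K}) (th : K) (n d' : nat).
Local Notation d := d'.+1.

Definition ev (M : 'M[R]_(n, d)) : 'rV[K]_n :=
  \row_s (map_poly io (pirow M s)).[th].

Definition evQ (Q : 'M[{poly R}]_n) : 'M[K]_n :=
  map_mx (fun q => (map_poly io q).[th]) Q.

Definition gp (H : 'M[R]_(n * d)) : 'M[K]_n :=
  \matrix_(t < n) ev (vec_mx (mxvec (delta_mx t 0 : 'M[R]_(n, d)) *m H)).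

Lemma evD M N : ev (M + N) = ev M + ev N.
Proof. by apply/rowP => s; rewrite !mxE pirowD rmorphD hornerD. Qed.

Lemma evZ a M : ev (a *: M) = io a *: ev M.
Proof. by apply/rowP => s; rewrite !mxE pirowZ map_polyZ hornerZ. Qed.

Lemma ev_delta0 (t : 'I_n) : ev (delta_mx t 0) = delta_mx 0 t.
Proof.
apply/rowP => s; rewrite !mxE pirow_delta expr0 map_polyZ rmorph1 hornerZ hornerC.
by rewrite mulr1 rmorph_nat eqxx /= eq_sym.
Qed.

Lemma lin_ext (F1 F2 : 'M[R]_(n, d) -> 'rV[K]_n) :
  (forall M N, F1 (M + N) = F1 M + F1 N) -> (forall a M, F1 (a *: M) = io a *: F1 M) ->
  (forall M N, F2 (M + N) = F2 M + F2 N) -> (forall a M, F2 (a *: M) = io a *: F2 M) ->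
  (forall i j, F1 (delta_mx i j) = F2 (delta_mx i j)) -> forall M, F1 M = F2 M.
Proof.
move=> h1D h1Z h2D h2Z hd M; rewrite (matrix_sum_delta M).
have h10 : F1 0 = 0 by rewrite -(scale0r 0) h1Z rmorph0 scale0r.
have h20 : F2 0 = 0 by rewrite -(scale0r 0) h2Z rmorph0 scale0r.
apply: (big_ind (fun X => F1 X = F2 X)) => //; first by rewrite h10 h20.
  by move=> X Y e1 e2; rewrite h1D h2D e1 e2.
move=> i _; apply: (big_ind (fun X => F1 X = F2 X)) => //; first by rewrite h10 h20.
  by move=> X Y e1 e2; rewrite h1D h2D e1 e2.
by move=> j _; rewrite h1Z h2Z hd.
Qed.

Variables (p : {poly R}) (hp : size p = d.+1) (hroot : (map_poly io p).[th] = 0).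

Lemma ev_mulQ Q M : ev (mulQ p Q M) = ev M *m evQ Q.
Proof.
apply/rowP => s; rewrite !mxE pirow_mulQ // horner_modp // rmorph_sum horner_sum.
by apply: eq_bigr => t _; rewrite !mxE rmorphM hornerM.
Qed.

Lemma evQX : evQ ('X%:M) = th%:M.
Proof.
apply/matrixP => i j; rewrite !mxE.
by case: eqP => _; rewrite ?mulr1n ?mulr0n ?map_polyX ?hornerX ?rmorph0 ?horner0.
Qed.

Lemma gp_ev (H : 'M[R]_(n * d)) : H *m Tm p n d = Tm p n d *m H ->
  forall M, ev (vec_mx (mxvec M *m H)) = ev M *m gp H.
Proof.
move=> hc; apply: lin_ext.
- by move=> M N; rewrite linearD /= mulmxDl linearD /= evD.
- by move=> a M; rewrite linearZ /= -scalemxAl linearZ /= evZ.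
- by move=> M N; rewrite evD mulmxDl.
- by move=> a M; rewrite evZ scalemxAl.
move=> t [j hj]; elim: j hj => [|j IH] hj.
  have -> : Ordinal hj = 0 by apply: val_inj.
  by rewrite ev_delta0 -rowE rowK.
have hj' : (j < d)%N by apply: ltnW.
rewrite -(mulQX_delta hp t (j:=Ordinal hj')) //.
rewrite ev_mulQ evQX -mul_GQ -mulmxA -/(Tm p n d) -hc mulmxA.
rewrite -[mxvec _ *m H](vec_mxK) mul_GQ mxvecK ev_mulQ evQX IH.
by rewrite -!mulmxA scalar_mxC.
Qed.

Lemma gp_mul (H H' : 'M[R]_(n * d)) : H' *m Tm p n d = Tm p n d *m H' ->
  gp (H *m H') = gp H *m gp H'.
Proof.
move=> hc; apply/row_matrixP => t; rewrite row_mul !rowK mulmxA.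
by rewrite -[mxvec _ *m H](vec_mxK) gp_ev // mxvecK.
Qed.

Lemma gp1 : gp 1%:M = 1%:M.
Proof. by apply/row_matrixP => t; rewrite rowK mulmx1 mxvecK ev_delta0 row1. Qed.

Lemma gp_GQ Q : gp (GQ p d Q) = evQ Q.
Proof.
apply/row_matrixP => t; rewrite rowK mul_GQ mxvecK ev_mulQ ev_delta0.
by rewrite -rowE.
Qed.

End EV.

Lemma gp_map (R R' K K' : fieldType) (sig : {rmorphism R -> R'})
  (io : {rmorphism R -> K}) (io' : {rmorphism R' -> K'}) (th : K) (th' : K')
  (kap : {rmorphism K -> K'}) :
  (forall x, kap (io x) = io' (sig x)) -> kap th = th' ->
  forall n d' (H : 'M[R]_(n * d'.+1)),
  gp io' th' (map_mx sig H) = map_mx kap (gp io th H).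
Proof.
move=> h1 h2 n d' H; apply/matrixP => t s; rewrite !mxE.
rewrite -(map_delta_mx sig) -map_mxvec -map_mxM -map_vec_mx.
rewrite /pirow -map_row -map_rVpoly -map_poly_comp -horner_map /= h2 -map_poly_comp.
by congr (_.[_]); apply: eq_map_poly => x /=; rewrite h1.
Qed.

Lemma pirow_sumZ (R : fieldType) k d (I : finType) (a : I -> R) (M : I -> 'M[R]_(k, d)) s :
  pirow (\sum_i a i *: M i) s = \sum_i a i *: pirow (M i) s.
Proof.
apply: (big_rec2 (fun X Y => pirow X s = Y)).
  by rewrite /pirow linear0 /= linear0.
by move=> i X Y _ <-; rewrite pirowD pirowZ.
Qed.

Lemma pirow_mulQX (R : fieldType) (p : {poly R}) k d (M : 'M[R]_(k, d)) s :
  size p = d.+1 -> pirow (mulQ p ('X%:M) M) s = (pirow M s * 'X) %% p.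
Proof.
move=> hp; rewrite pirow_mulQ // (bigD1 s) //= big1 ?addr0; first by rewrite mxE eqxx mulr1n.
by move=> u ne; rewrite mxE (negPf ne) mulr0n mulr0.
Qed.

Lemma rowfreeP' (F : fieldType) m N (A : 'M[F]_(m, N)) :
  (forall w : 'rV_m, w *m A = 0 -> w = 0) -> row_free A.
Proof.
move=> h; rewrite -kermx_eq0; apply/eqP/row_matrixP => i; rewrite row0; apply: h.
by apply/sub_kermxP; rewrite row_sub.
Qed.

Section Canon.
Variables (F : fieldType) (f : {poly F}) (d' n' : nat).
Hypothesis hf : size f = d'.+2.
Hypothesis firr : irreducible_poly f.
Local Notation d := d'.+1.
Local Notation N := (n'.+1 * d'.+1)%N.
Variable S : 'M[F]_N.
Hypothesis hSf : horner_mx S f = 0.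

Definition hS (q : {poly F}) : 'M[F]_N := horner_mx S q.

Lemma hS_mod q : hS (q %% f) = hS q.
Proof.
rewrite /hS {2}(divp_eq q f) rmorphD rmorphM /= hSf mulr0 add0r //.
Qed.

Definition Bm k (V : 'M[F]_(k, N)) : 'M[F]_(k * d, N) :=
  \matrix_(i < k * d) (\sum_(s < k) row s V *m hS (pirow (vec_mx (delta_mx 0 i : 'rV_(k * d))) s)).

Lemma Bm_mul k (V : 'M[F]_(k, N)) w :
  w *m Bm V = \sum_s row s V *m hS (pirow (vec_mx w) s).
Proof.
rewrite mulmx_sum_row.
under eq_bigr do rewrite rowK scaler_sumr.
rewrite exchange_big; apply: eq_bigr => s _.
rewrite {2}(row_sum_delta w) linear_sum /=.
have -> : \sum_(i < k * d) vec_mx (w 0 i *: (delta_mx 0 i : 'rV_(k * d))) =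
   \sum_(i < k * d) w 0 i *: vec_mx (delta_mx 0 i : 'rV_(k * d)).
  by apply: eq_bigr => i _; rewrite linearZ.
rewrite pirow_sumZ /hS linear_sum /= mulmx_sumr.
apply: eq_bigr => i _; by rewrite linearZ /= scalemxAr.
Qed.

Lemma Bm_T k (V : 'M[F]_(k, N)) : Bm V *m S = Tm f k d *m Bm V.
Proof.
apply: mx_rV_eq => w; rewrite !mulmxA Bm_mul mulmx_suml Bm_mul mul_GQ'.
apply: eq_bigr => s _; rewrite pirow_mulQX // -[hS (_ %% _)]/(hS _) hS_mod.
by rewrite /hS rmorphM /= horner_mx_X mulmxA.
Qed.

Lemma Bm_inv k (V : 'M[F]_(k, N)) c (u : 'rV_(k * d)) :
  exists u' : 'rV_(k * d), u *m Bm V *m hS c = u' *m Bm V.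
Proof.
elim/poly_ind: c u => [|c a IH] u.
  by exists 0; rewrite /hS rmorph0 mulmx0 mul0mx.
rewrite /hS rmorphD rmorphM /= horner_mx_X horner_mx_C -mulmxE mulmxDr mulmxA.
have [u1 ->] := IH u.
exists (u1 *m Tm f k d + a *: u); rewrite mulmxDl; congr (_ + _).
  by have := congr1 (mulmx u1) (Bm_T V); rewrite !mulmxA.
by rewrite mul_mx_scalar scalemxAl.
Qed.

Lemma Bm_step k (V : 'M[F]_(k, N)) : (k < n'.+1)%N -> row_free (Bm V) ->
  exists V' : 'M[F]_(k.+1, N), row_free (Bm V').
Proof.
move=> hk hV.
have [i hi] : exists i : 'I_N, ~~ ((delta_mx 0 i : 'rV[F]_N) <= Bm V)%MS.
  case: (pickP (fun i : 'I_N => ~~ ((delta_mx 0 i : 'rV[F]_N) <= Bm V)%MS)) => [i hi | hall].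
    by exists i.
  exfalso.
  have : (1%:M <= Bm V)%MS.
    apply/row_subP => i; rewrite row1; have := hall i; by case: (_ <= _)%MS.
  move/mxrankS; rewrite mxrank1 => h.
  have := leq_trans h (rank_leq_row _); rewrite leq_pmul2r // => h2.
  by move: hk; rewrite ltnNge h2.
set v := delta_mx 0 i : 'rV[F]_N.
exists (\matrix_(s < k.+1) (if unlift ord0 s is Some s' then row s' V else v)).
apply: rowfreeP' => w; rewrite Bm_mul big_ord_recl /= rowK unlift_none.
under eq_bigr do rewrite rowK liftK.
set w2 := mxvec (\matrix_(s < k) row (lift ord0 s) (vec_mx w)).
have -> : \sum_(i0 < k) row i0 V *m hS (pirow (vec_mx w) (lift ord0 i0)) = w2 *m Bm V.
  by rewrite Bm_mul; apply: eq_bigr => s _; rewrite /w2 mxvecK /pirow rowK.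
set g0 := pirow (vec_mx w) ord0 => hw.
have hg0 : g0 = 0.
  apply/eqP; apply: contraNT hi => nz.
  have cop : coprimep g0 f.
    rewrite coprimep_sym irreducible_poly_coprime //; apply/negP => hd.
    have := dvdp_leq nz hd; rewrite hf leqNgt ltnS.
    by rewrite /g0 size_pirow.
  have [[u1 u2] /= e] := Bezout_eq1_coprimepP _ _ cop.
  rewrite -/v.
  have -> : v = v *m hS g0 *m hS u1.
    have -> : v *m hS g0 *m hS u1 = v *m hS (u1 * g0 + u2 * f).
      rewrite /hS rmorphD !rmorphM /= hSf mulr0 addr0 (comm_horner_mx2 S u1 g0).
      by rewrite -mulmxA.
    by rewrite e /hS rmorph1 mulmx1.
  have -> : v *m hS g0 = (- w2) *m Bm V.
    by apply/eqP; rewrite mulNmx -addr_eq0 hw.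
  by have [u' ->] := Bm_inv V u1 (- w2); rewrite submxMl.
move: hw; rewrite hg0 /hS rmorph0 mulmx0 add0r => hw2.
have w20 : w2 = 0 by apply: (row_free_inj hV); rewrite hw2 mul0mx.
suff h : vec_mx w = 0 by rewrite -(vec_mxK w) h linear0.
apply/row_matrixP => s; rewrite row0.
case: (unliftP ord0 s) => [s' ->|->].
  have := congr1 (fun A => row s' (vec_mx A)) w20; rewrite /w2 mxvecK rowK => ->.
  by rewrite linear0 row0.
by rewrite -(rVpolyK (row _ _)) -/(pirow _ _) -/g0 hg0 linear0.
Qed.

Lemma Bm_all k : (k <= n'.+1)%N -> exists V : 'M[F]_(k, N), row_free (Bm V).
Proof.
elim: k => [|k IH] hk.
  by exists 0; apply: rowfreeP' => w _; apply/rowP => -[i hi]; exfalso; move: hi; rewrite mul0n.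
have [V hV] := IH (ltnW hk).
exact: (Bm_step hk hV).
Qed.

Lemma canon : exists B : 'M[F]_N, B \in unitmx /\ B *m S = Tm f n'.+1 d *m B.
Proof.
have [V hV] := Bm_all (leqnn n'.+1).
exists (Bm V); split; last exact: Bm_T.
by rewrite -row_free_unit.
Qed.

End Canon.

Lemma evQ_mul (R K : fieldType) (io : {rmorphism R -> K}) th n (Q Q' : 'M[{poly R}]_n) :
  evQ io th (Q *m Q') = evQ io th Q *m evQ io th Q'.
Proof.
apply/matrixP => t s; rewrite !mxE rmorph_sum horner_sum; apply: eq_bigr => u _.
by rewrite !mxE rmorphM hornerM.
Qed.

Lemma evQ1 (R K : fieldType) (io : {rmorphism R -> K}) th n :
  evQ io th (1%:M : 'M[{poly R}]_n) = 1%:M.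
Proof.
apply/matrixP => t s; rewrite !mxE.
by case: eqP => _; rewrite ?mulr1n ?mulr0n ?rmorph1 ?rmorph0 ?hornerC.
Qed.

Lemma map_mx_inj0 (R K : fieldType) (io : {rmorphism R -> K}) m n (A : 'M[R]_(m, n)) :
  map_mx io A = 0 -> A = 0.
Proof.
move=> h; apply/matrixP => x y; have := congr1 (fun B : 'M[K]_(m, n) => B x y) h.
by rewrite !mxE => /eqP; rewrite fmorph_eq0 => /eqP.
Qed.

Lemma invmxM' (R : fieldType) n (A B : 'M[R]_n) :
  A \in unitmx -> B \in unitmx -> invmx (A *m B) = invmx B *m invmx A.
Proof.
move=> Au Bu; have ABu : A *m B \in unitmx by rewrite unitmx_mul Au.
rewrite -[RHS]mul1mx -(mulVmx ABu) -!mulmxA (mulKVmx Bu) (mulmxV Au) mulmx1 //.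
Qed.

Lemma comm_inv (R : fieldType) n (X Y : 'M[R]_n) :
  X \in unitmx -> X *m Y = Y *m X -> invmx X *m Y = Y *m invmx X.
Proof.
move=> XU XY; rewrite -[LHS]mulmx1 -(mulmxV XU) !mulmxA -[invmx X *m Y *m X]mulmxA.
by rewrite -XY mulmxA mulVmx // mul1mx.
Qed.

Unset Implicit Arguments.
Section Main.
Variables (V Ed : finType) (l r : Ed -> V)
  (FV : V -> fieldType) (FE : Ed -> fieldType)
  (jl : forall k, {rmorphism FV (l k) -> FE k})
  (jr : forall k, {rmorphism FV (r k) -> FE k})
  (F : fieldType) (phi : forall i, {rmorphism F -> FV i})
  (HFIS : is_FIS jl jr phi)
  (f : {poly F}) (Hirr : irreducible_poly f) (Hsep : separable_poly f)
  (E : fieldType) (iotaE : {rmorphism F -> E}) (thetaE : E)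
  (HE : presents iotaE thetaE f)
  (nV : V -> nat) (fV : forall i, 'I_(nV i) -> {poly FV i})
  (HfV : forall i, map_poly (phi i) f = \prod_(b < nV i) fV i b)
  (HfVirr : forall i b, fV i b \is monic /\ irreducible_poly (fV i b))
  (nE : Ed -> nat) (fE : forall k, 'I_(nE k) -> {poly FE k})
  (HfE : forall k, map_poly (jl k \o phi (l k)) f = \prod_(a < nE k) fE k a)
  (HfEirr : forall k a, fE k a \is monic /\ irreducible_poly (fE k a))
  (EV : forall i, 'I_(nV i) -> fieldType)
  (iotaV : forall i b, {rmorphism FV i -> EV i b}) (thetaV : forall i b, EV i b)
  (HEV : forall i b, presents (iotaV i b) (thetaV i b) (fV i b))
  (EE : forall k, 'I_(nE k) -> fieldType)
  (iotaEE : forall k a, {rmorphism FE k -> EE k a}) (thetaEE : forall k a, EE k a)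
  (HEE : forall k a, presents (iotaEE k a) (thetaEE k a) (fE k a)).
Variable d' : nat.
Hypothesis hf : size f = d'.+2.

Lemma compat k x : jl k (phi (l k) x) = jr k (phi (r k) x).
Proof. by case: HFIS => _ _ [h _ _]. Qed.

Definition pV i := map_poly (phi i) f.
Definition pE k := map_poly (jl k \o phi (l k)) f.

Lemma size_pV i : size (pV i) = d'.+2.
Proof. by rewrite size_map_poly. Qed.
Lemma size_pE k : size (pE k) = d'.+2.
Proof. by rewrite /pE size_map_poly. Qed.
Lemma pE_l k : map_poly (jl k) (pV (l k)) = pE k.
Proof. by rewrite /pE /pV map_poly_comp. Qed.
Lemma pE_r k : map_poly (jr k) (pV (r k)) = pE k.
Proof.
rewrite /pE /pV -map_poly_comp; apply: eq_map_poly => x /=; by rewrite compat.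
Qed.
Lemma sep_pV i : separable_poly (pV i).
Proof. by rewrite separable_map. Qed.
Lemma sep_pE k : separable_poly (pE k).
Proof. by rewrite /pE separable_map. Qed.
Lemma prod_fV i : \prod_b fV i b = pV i.
Proof. by rewrite /pV HfV. Qed.
Lemma prod_fE k : \prod_a fE k a = pE k.
Proof. by rewrite /pE HfE. Qed.

Lemma dvdp_big_elem (R : fieldType) (I : finType) (g : I -> {poly R}) i :
  g i %| \prod_j g j.
Proof. by rewrite (bigD1 i) //= dvdp_mulr. Qed.

Lemma fV_dvd i b : fV i b %| pV i.
Proof. rewrite -prod_fV; exact: dvdp_big_elem. Qed.
Lemma fE_dvd k a : fE k a %| pE k.
Proof. rewrite -prod_fE; exact: dvdp_big_elem. Qed.

Lemma ker_V i b q : (map_poly (iotaV i b) q).[thetaV i b] = 0 <-> fV i b %| q.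
Proof. by case: (HEV i b) => _ h; apply: h. Qed.
Lemma ker_E k a q : (map_poly (iotaEE k a) q).[thetaEE k a] = 0 <-> fE k a %| q.
Proof. by case: (HEE k a) => _ h; apply: h. Qed.

Lemma root_V i b : (map_poly (iotaV i b) (pV i)).[thetaV i b] = 0.
Proof. by apply/ker_V; apply: fV_dvd. Qed.
Lemma root_E k a : (map_poly (iotaEE k a) (pE k)).[thetaEE k a] = 0.
Proof. by apply/ker_E; apply: fE_dvd. Qed.

Lemma size_fE k a : (1 < size (fE k a))%N.
Proof. by case: (HfEirr k a) => _ [h _]. Qed.

Lemma exbl k a : exists b, fE k a %| map_poly (jl k) (fV (l k) b).
Proof.
have := fE_dvd k a; rewrite -pE_l -prod_fV rmorph_prod.
case/(irr_dvd_prod (HfEirr k a).2) => b _ h; by exists b.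
Qed.
Lemma exbr k a : exists b, fE k a %| map_poly (jr k) (fV (r k) b).
Proof.
have := fE_dvd k a; rewrite -pE_r -prod_fV rmorph_prod.
case/(irr_dvd_prod (HfEirr k a).2) => b _ h; by exists b.
Qed.

Definition bl k a := xchoose (exbl k a).
Definition br k a := xchoose (exbr k a).

Lemma bl_spec k a b : fE k a %| map_poly (jl k) (fV (l k) b) <-> b = bl k a.
Proof.
split=> [h|->]; last exact: xchooseP (exbl k a).
apply: (uniq_dvd_prod (r := fun b => map_poly (jl k) (fV (l k) b)) _ (size_fE k a) h).
  have -> : (\prod_i map_poly (jl k) (fV (l k) i)) = map_poly (jl k) (\prod_i fV (l k) i).
    by rewrite rmorph_prod.
  by rewrite prod_fV pE_l sep_pE.
exact: xchooseP (exbl k a).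
Qed.
Lemma br_spec k a b : fE k a %| map_poly (jr k) (fV (r k) b) <-> b = br k a.
Proof.
split=> [h|->]; last exact: xchooseP (exbr k a).
apply: (uniq_dvd_prod (r := fun b => map_poly (jr k) (fV (r k) b)) _ (size_fE k a) h).
  have -> : (\prod_i map_poly (jr k) (fV (r k) i)) = map_poly (jr k) (\prod_i fV (r k) i).
    by rewrite rmorph_prod.
  by rewrite prod_fV pE_r sep_pE.
exact: xchooseP (exbr k a).
Qed.

Lemma root_kl k a :
  (map_poly (iotaEE k a \o jl k) (fV (l k) (bl k a))).[thetaEE k a] = 0.
Proof. by rewrite map_poly_comp; apply/ker_E/bl_spec. Qed.
Lemma root_kr k a :
  (map_poly (iotaEE k a \o jr k) (fV (r k) (br k a))).[thetaEE k a] = 0.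
Proof. by rewrite map_poly_comp; apply/ker_E/br_spec. Qed.
Lemma root_rho i b : (map_poly (iotaV i b \o phi i) f).[thetaV i b] = 0.
Proof. by rewrite map_poly_comp; apply: root_V. Qed.

Definition kl k a := sval (lift_sig (HEV (l k) (bl k a)) (root_kl k a)).
Definition kr k a := sval (lift_sig (HEV (r k) (br k a)) (root_kr k a)).
Definition rho i b := sval (lift_sig HE (root_rho i b)).

Lemma kl_spec k a :
  (forall x, kl k a (iotaV (l k) (bl k a) x) = iotaEE k a (jl k x)) /\
  kl k a (thetaV (l k) (bl k a)) = thetaEE k a /\
  (forall q, kl k a ((map_poly (iotaV (l k) (bl k a)) q).[thetaV (l k) (bl k a)]) =
     (map_poly (iotaEE k a) (map_poly (jl k) q)).[thetaEE k a]).
Proof.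
have [h1 [h2 h3]] := svalP (lift_sig (HEV (l k) (bl k a)) (root_kl k a)).
split; first exact: h1; split; first exact: h2.
by move=> q; rewrite /kl h3 map_poly_comp.
Qed.
Lemma kr_spec k a :
  (forall x, kr k a (iotaV (r k) (br k a) x) = iotaEE k a (jr k x)) /\
  kr k a (thetaV (r k) (br k a)) = thetaEE k a /\
  (forall q, kr k a ((map_poly (iotaV (r k) (br k a)) q).[thetaV (r k) (br k a)]) =
     (map_poly (iotaEE k a) (map_poly (jr k) q)).[thetaEE k a]).
Proof.
have [h1 [h2 h3]] := svalP (lift_sig (HEV (r k) (br k a)) (root_kr k a)).
split; first exact: h1; split; first exact: h2.
by move=> q; rewrite /kr h3 map_poly_comp.
Qed.
Lemma rho_spec i b :
  (forall x, rho i b (iotaE x) = iotaV i b (phi i x)) /\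
  rho i b thetaE = thetaV i b /\
  (forall q, rho i b ((map_poly iotaE q).[thetaE]) =
     (map_poly (iotaV i b) (map_poly (phi i) q)).[thetaV i b]).
Proof.
have [h1 [h2 h3]] := svalP (lift_sig HE (root_rho i b)).
split; first exact: h1; split; first exact: h2.
by move=> q; rewrite /rho h3 map_poly_comp.
Qed.

Lemma nV_pos i : (0 < nV i)%N.
Proof.
have h := prod_fV i; have hs := size_pV i; move: (fV i) h.
case: (nV i) => [|m] g h //; rewrite big_ord0 in h.
by move: hs; rewrite -h size_poly1.
Qed.

Lemma card_pos : (0 < #|{: {i : V & 'I_(nV i)}}|)%N.
Proof.
case: HFIS => hV _ _; case/card_gt0P: hV => i _.
by apply/card_gt0P; exists (Tagged (fun i => 'I_(nV i)) (Ordinal (nV_pos i))).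
Qed.

Lemma lim_compat k a x :
  kl k a (rho (l k) (bl k a) x) = kr k a (rho (r k) (br k a) x).
Proof.
case: HE => hsur _; have [q ->] := hsur x.
rewrite (rho_spec _ _).2.2 (rho_spec _ _).2.2 (kl_spec _ _).2.2 (kr_spec _ _).2.2.
rewrite -!map_poly_comp; congr (_.[_]); apply: eq_map_poly => y /=.
by rewrite compat.
Qed.

Lemma lim_inj (x y : E) :
  (forall i' : {i : V & 'I_(nV i)}, rho (tag i') (tagged i') x = rho (tag i') (tagged i') y) ->
  x = y.
Proof.
case: HFIS => hV _ _; case/card_gt0P: hV => i _.
move/(_ (Tagged (fun i => 'I_(nV i)) (Ordinal (nV_pos i)))) => /=; exact: fmorph_inj.
Qed.

Lemma exq i (A : forall b : 'I_(nV i), EV i b) :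
  exists q : {poly FV i}, (size q <= d'.+1)%N &&
    [forall b, (map_poly (iotaV i b) q).[thetaV i b] == A b].
Proof.
have hsV : forall b (y : EV i b), exists q, y == (map_poly (iotaV i b) q).[thetaV i b].
  by move=> b y; case: (HEV i b) => hsur _; have [q e] := hsur y; exists q; apply/eqP.
pose y b := xchoose (hsV b (A b)).
have [z hz] := crt_sep (s := index_enum 'I_(nV i)) (r := fV i) y
  (ltac:(by rewrite prod_fV sep_pV)).
exists (z %% pV i); apply/andP; split.
  have nz : pV i != 0 by rewrite -size_poly_eq0 size_pV.
  by have := ltn_modpN0 z nz; rewrite size_pV.
apply/forallP => b; rewrite horner_modp ?root_V //.
have /ker_V : fV i b %| z - y b by apply: hz; rewrite mem_index_enum.
rewrite rmorphB hornerD hornerN => /eqP; rewrite subr_eq0 => /eqP ->.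
by rewrite eq_sym; apply: (xchooseP (hsV b (A b))).
Qed.

Lemma lim_surj (A : forall i' : {i : V & 'I_(nV i)}, EV (tag i') (tagged i')) :
  (forall k' : {k : Ed & 'I_(nE k)},
     kl (tag k') (tagged k') (A (Tagged (fun i => 'I_(nV i)) (bl (tag k') (tagged k')))) =
     kr (tag k') (tagged k') (A (Tagged (fun i => 'I_(nV i)) (br (tag k') (tagged k'))))) ->
  exists x : E, forall i', rho (tag i') (tagged i') x = A i'.
Proof.
move=> hA.
pose qi i := xchoose (exq i (fun b => A (Tagged (fun i => 'I_(nV i)) b))).
have qiP : forall i, (size (qi i) <= d'.+1)%N /\ forall b,
    (map_poly (iotaV i b) (qi i)).[thetaV i b] = A (Tagged (fun i => 'I_(nV i)) b).
  move=> i; have /andP[h1 /forallP h2] := xchooseP (exq i (fun b => A (Tagged (fun i => 'I_(nV i)) b))).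
  by split => // b; apply/eqP; apply: h2.
have qcomp : forall k, map_poly (jl k) (qi (l k)) = map_poly (jr k) (qi (r k)).
  move=> k; apply/eqP; rewrite -subr_eq0; apply/eqP.
  set c := _ - _.
  have hd : pE k %| c.
    rewrite -prod_fE; apply: dvdp_prod_sep; first by rewrite prod_fE sep_pE.
    move=> a _; apply/ker_E; rewrite rmorphB hornerD hornerN.
    rewrite -(kl_spec k a).2.2 -(kr_spec k a).2.2 (qiP _).2 (qiP _).2.
    by rewrite (hA (Tagged (fun k => 'I_(nE k)) a)) subrr.
  apply/eqP; apply: contraTT hd => nz; apply/negP => hd.
  have := dvdp_leq nz hd; rewrite size_pE.
  have := size_add (map_poly (jl k) (qi (l k))) (- map_poly (jr k) (qi (r k))).
  rewrite size_opp !size_map_poly => h1 h2.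
  have := leq_trans h2 h1; rewrite ltnNge geq_max (qiP _).1 (qiP _).1.
  by [].
have exz : forall j, exists z : F, [forall i, phi i z == (qi i)`_j].
  move=> j; case: HFIS => _ _ [_ _ hs].
  have [z hz] := hs (fun i => (qi i)`_j) (fun k => ltac:(by rewrite -!coef_map qcomp)).
  by exists z; apply/forallP => i; rewrite hz.
pose Q := \poly_(j < d'.+1) xchoose (exz j).
have hQ : forall i, map_poly (phi i) Q = qi i.
  move=> i; apply/polyP => j; rewrite coef_map coef_poly; case: ltnP => hj.
    exact: (eqP (forallP (xchooseP (exz j)) i)).
  by rewrite [RHS]nth_default ?(leq_trans (qiP i).1 hj) //; apply: rmorph0.
exists ((map_poly iotaE Q).[thetaE]); case=> i b /=.
by rewrite (rho_spec _ _).2.2 hQ (qiP i).2.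
Qed.

Lemma exQ k n (h : forall a : 'I_(nE k), 'M[EE k a]_n) :
  exists Q : 'M[{poly FE k}]_n, [forall a, evQ (iotaEE k a) (thetaEE k a) Q == h a].
Proof.
have hsE : forall a (y : EE k a), exists q, y == (map_poly (iotaEE k a) q).[thetaEE k a].
  by move=> a y; case: (HEE k a) => hsur _; have [q e] := hsur y; exists q; apply/eqP.
have ez : forall t s, exists z : {poly FE k},
    [forall a, (map_poly (iotaEE k a) z).[thetaEE k a] == h a t s].
  move=> t s; pose y a := xchoose (hsE a (h a t s)).
  have [z hz] := crt_sep (s := index_enum 'I_(nE k)) (r := fE k) y
    (ltac:(by rewrite prod_fE sep_pE)).
  exists z; apply/forallP => a.
  have /ker_E : fE k a %| z - y a by apply: hz; rewrite mem_index_enum.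
  rewrite rmorphB hornerD hornerN => /eqP; rewrite subr_eq0 => /eqP ->.
  by rewrite eq_sym; apply: (xchooseP (hsE a (h a t s))).
exists (\matrix_(t, s) xchoose (ez t s)); apply/forallP => a; apply/eqP.
apply/matrixP => t s; rewrite !mxE; exact: (eqP (forallP (xchooseP (ez t s)) a)).
Qed.

Lemma GQ_unit k n (Q Q' : 'M[{poly FE k}]_n) :
  (forall a, evQ (iotaEE k a) (thetaEE k a) Q *m evQ (iotaEE k a) (thetaEE k a) Q' = 1%:M) ->
  GQ (pE k) d'.+1 Q \in unitmx.
Proof.
move=> h; suff : GQ (pE k) d'.+1 Q *m GQ (pE k) d'.+1 Q' = 1%:M by case/mulmx1_unit.
rewrite GQ_mul ?size_pE //.
transitivity (GQ (pE k) d'.+1 (1%:M : 'M[{poly FE k}]_n)); last exact (GQ1 n (size_pE k)).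
apply: (GQ_mod (size_pE k)) => t s.
rewrite -prod_fE; apply: dvdp_prod_sep; first by rewrite prod_fE sep_pE.
move=> a _; apply/ker_E; rewrite rmorphB hornerD hornerN.
have := congr1 (fun A : 'M[EE k a]_n => A t s) (h a); rewrite -evQ_mul -(evQ1 (iotaEE k a) (thetaEE k a)).
by rewrite !mxE => ->; rewrite subrr.
Qed.

Lemma patch_E (Hp : patching jl jr) :
  @patching {i : V & 'I_(nV i)} {k : Ed & 'I_(nE k)}
    (fun k' => Tagged (fun i => 'I_(nV i)) (bl (tag k') (tagged k')))
    (fun k' => Tagged (fun i => 'I_(nV i)) (br (tag k') (tagged k')))
    (fun i' => EV (tag i') (tagged i'))
    (fun k' => EE (tag k') (tagged k'))
    (fun k' => kl (tag k') (tagged k'))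
    (fun k' => kr (tag k') (tagged k')).
Proof.
move=> [//|n'] _ g hg.
have hQ := fun k => exQ k n'.+1 (fun a => g (Tagged (fun k => 'I_(nE k)) a)).
have hQ' := fun k => exQ k n'.+1 (fun a => invmx (g (Tagged (fun k => 'I_(nE k)) a))).
pose Qk k := xchoose (hQ k). pose Qk' k := xchoose (hQ' k).
have QkP : forall k a, evQ (iotaEE k a) (thetaEE k a) (Qk k) = g (Tagged (fun k => 'I_(nE k)) a).
  by move=> k a; exact: (eqP (forallP (xchooseP (hQ k)) a)).
have Qk'P : forall k a, evQ (iotaEE k a) (thetaEE k a) (Qk' k) =
    invmx (g (Tagged (fun k => 'I_(nE k)) a)).
  by move=> k a; exact: (eqP (forallP (xchooseP (hQ' k)) a)).
pose G k := GQ (pE k) d'.+1 (Qk k).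
have Gu : forall k, G k \in unitmx.
  move=> k; apply: (GQ_unit k n'.+1 (Qk k) (Qk' k)) => a.
  rewrite QkP Qk'P mulmxV //; exact: (hg (Tagged (fun k => 'I_(nE k)) a)).
have [G' [G'u G'e]] := Hp (n'.+1 * d'.+1)%N (ltac:(by rewrite muln_gt0)) G Gu.
pose T i := Tm (pV i) n'.+1 d'.+1.
have Tl : forall k, map_mx (jl k) (T (l k)) = Tm (pE k) n'.+1 d'.+1.
  by move=> k; rewrite /T map_Tm pE_l.
have Tr : forall k, map_mx (jr k) (T (r k)) = Tm (pE k) n'.+1 d'.+1.
  by move=> k; rewrite /T map_Tm pE_r.
have GT : forall k, G k *m Tm (pE k) n'.+1 d'.+1 = Tm (pE k) n'.+1 d'.+1 *m G k.
  by move=> k; rewrite /G Tm_comm // size_pE.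
have hAB : forall k, map_mx (jl k) (G' (l k)) = map_mx (jr k) (G' (r k)) *m G k.
  by move=> k; rewrite (G'e k) mulKVmx // map_unitmx G'u.
pose Si i := G' i *m T i *m invmx (G' i).
have Sc : forall k, map_mx (jl k) (Si (l k)) = map_mx (jr k) (Si (r k)).
  move=> k; rewrite /Si !map_mxM !map_invmx Tl Tr hAB.
  rewrite invmxM' ?map_unitmx ?G'u // -!mulmxA; congr (_ *m _).
  by rewrite mulmxA GT -mulmxA mulKVmx // Gu.
have exS : forall x y, exists z : F, [forall i, phi i z == Si i x y].
  move=> x y; case: HFIS => _ _ [_ _ hs].
  have [z hz] := hs (fun i => Si i x y)
    (fun k => ltac:(by have := congr1 (fun A : 'M[FE k]_(n'.+1 * d'.+1) => A x y) (Sc k);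
       rewrite !mxE)).
  by exists z; apply/forallP => i; rewrite hz.
pose S : 'M[F]_(n'.+1 * d'.+1) := \matrix_(x, y) xchoose (exS x y).
have hS : forall i, map_mx (phi i) S = Si i.
  move=> i; apply/matrixP => x y; rewrite [LHS]mxE [in LHS]mxE.
  exact: (eqP (forallP (xchooseP (exS x y)) i)).
have hSf : horner_mx S f = 0.
  case: HFIS => hV _ _; case/card_gt0P: hV => i0 _.
  suff : map_mx (phi i0) (horner_mx S f) = 0 by move/map_mx_inj0.
  rewrite map_horner_mx hS -/(pV i0) /Si.
  rewrite horner_mx_uconj; last exact: G'u.
  rewrite /T horner_Tm ?size_pV //.
  have -> : GQ (pV i0) d'.+1 ((pV i0)%:M : 'M_n'.+1) = GQ (pV i0) d'.+1 ((0%:P)%:M : 'M_n'.+1).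
    apply: (GQ_mod (size_pV i0)) => t s; rewrite !mxE.
    by case: eqP => _; rewrite ?mulr1n ?mulr0n ?subr0 ?subrr ?dvdpp ?dvdp0.
  rewrite GQ_scal ?size_pV //.
  have -> : (0%:M : 'M[FV i0]_(n'.+1 * d'.+1)) = 0.
    by apply/matrixP => x y; rewrite !mxE mul0rn.
  by rewrite mulmx0 mul0mx.
have [B [Bu BS]] := canon hf Hirr hSf.
pose H i := map_mx (phi i) B *m G' i.
have Hu : forall i, H i \in unitmx.
  by move=> i; rewrite unitmx_mul map_unitmx Bu G'u.
have HT : forall i, H i *m T i = T i *m H i.
  move=> i; have e1 : G' i *m T i = Si i *m G' i by rewrite /Si mulmxKV ?G'u.
  have e2 : map_mx (phi i) B *m Si i = T i *m map_mx (phi i) B.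
    by rewrite -hS -map_mxM BS map_mxM map_Tm.
  by rewrite /H -mulmxA e1 mulmxA e2 -mulmxA.
have Hcomp : forall k, map_mx (jr k) (H (r k)) *m G k = map_mx (jl k) (H (l k)).
  move=> k; rewrite /H !map_mxM -mulmxA -hAB.
  congr (_ *m _); rewrite -!map_mx_comp; apply: eq_map_mx => x /=.
  by rewrite compat.
have gpu : forall i b, gp (iotaV i b) (thetaV i b) (H i) \in unitmx.
  move=> i b.
  have hi : invmx (H i) *m T i = T i *m invmx (H i).
    exact: comm_inv (Hu i) (HT i).
  have e : gp (iotaV i b) (thetaV i b) (H i) *m gp (iotaV i b) (thetaV i b) (invmx (H i)) = 1%:M.
    by rewrite -(gp_mul (size_pV i) (root_V i b)) // mulmxV ?Hu //; apply: gp1.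
  by case/mulmx1_unit: e.
exists (fun i' => gp (iotaV (tag i') (tagged i')) (thetaV (tag i') (tagged i')) (H (tag i'))).
split; first by case=> i b /=; apply: gpu.
case=> k a /=.
have e1 := gp_map (kl_spec k a).1 (kl_spec k a).2.1 (H (l k)).
have e2 := gp_map (kr_spec k a).1 (kr_spec k a).2.1 (H (r k)).
rewrite -e1 -e2 -Hcomp (gp_mul (size_pE k) (root_E k a)) ?GT //.
rewrite (gp_GQ (size_pE k) (root_E k a)) QkP mulKmx // e2 map_unitmx; exact: gpu.
Qed.

Lemma main_sec :
  exists (bl : forall k, 'I_(nE k) -> 'I_(nV (l k)))
         (br : forall k, 'I_(nE k) -> 'I_(nV (r k))),
    (forall k a (b : 'I_(nV (l k))),
        fE k a %| map_poly (jl k) (fV (l k) b) <-> b = bl k a) /\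
    (forall k a (b : 'I_(nV (r k))),
        fE k a %| map_poly (jr k) (fV (r k) b) <-> b = br k a) /\
    exists (kl : forall k a, {rmorphism EV (l k) (bl k a) -> EE k a})
           (kr : forall k a, {rmorphism EV (r k) (br k a) -> EE k a})
           (rho : forall i b, {rmorphism E -> EV i b}),
      (forall k a x, kl k a (iotaV (l k) (bl k a) x) = iotaEE k a (jl k x)) /\
      (forall k a, kl k a (thetaV (l k) (bl k a)) = thetaEE k a) /\
      (forall k a x, kr k a (iotaV (r k) (br k a) x) = iotaEE k a (jr k x)) /\
      (forall k a, kr k a (thetaV (r k) (br k a)) = thetaEE k a) /\
      (forall i b x, rho i b (iotaE x) = iotaV i b (phi i x)) /\
      (forall i b, rho i b thetaE = thetaV i b) /\
      @is_FIS {i : V & 'I_(nV i)} {k : Ed & 'I_(nE k)}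
        (fun k' => Tagged (fun i => 'I_(nV i)) (bl (tag k') (tagged k')))
        (fun k' => Tagged (fun i => 'I_(nV i)) (br (tag k') (tagged k')))
        (fun i' => EV (tag i') (tagged i'))
        (fun k' => EE (tag k') (tagged k'))
        (fun k' => kl (tag k') (tagged k'))
        (fun k' => kr (tag k') (tagged k'))
        E (fun i' => rho (tag i') (tagged i')) /\
      (patching jl jr ->
       @patching {i : V & 'I_(nV i)} {k : Ed & 'I_(nE k)}
        (fun k' => Tagged (fun i => 'I_(nV i)) (bl (tag k') (tagged k')))
        (fun k' => Tagged (fun i => 'I_(nV i)) (br (tag k') (tagged k')))
        (fun i' => EV (tag i') (tagged i'))
        (fun k' => EE (tag k') (tagged k'))
        (fun k' => kl (tag k') (tagged k'))
        (fun k' => kr (tag k') (tagged k'))).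
Proof.
exists bl, br; split; first exact: bl_spec.
split; first exact: br_spec.
exists kl, kr, rho.
split; first by move=> k a x; exact: (kl_spec k a).1.
split; first by move=> k a; exact: (kl_spec k a).2.1.
split; first by move=> k a x; exact: (kr_spec k a).1.
split; first by move=> k a; exact: (kr_spec k a).2.1.
split; first by move=> i b x; exact: (rho_spec i b).1.
split; first by move=> i b; exact: (rho_spec i b).2.1.
split; last exact: patch_E.
split.
- exact: card_pos.
- case=> k a /=; apply/negP => /eqP /(congr1 tag) /= e.
  by case: HFIS => _ hl _; move: (hl k); rewrite e eqxx.
- split.
  + by case=> k a x /=; apply: lim_compat.
  + exact: lim_inj.
  + exact: lim_surj.
Qed.

End Main.

Set Implicit Arguments.
Unset Implicit Arguments.

Theorem mainTheorem11
  (V Ed : finType) (l r : Ed -> V)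
  (FV : V -> fieldType) (FE : Ed -> fieldType)
  (jl : forall k, {rmorphism FV (l k) -> FE k})
  (jr : forall k, {rmorphism FV (r k) -> FE k})
  (F : fieldType) (phi : forall i, {rmorphism F -> FV i})
  (HFIS : is_FIS jl jr phi)
  (f : {poly F}) (Hmonic : f \is monic) (Hirr : irreducible_poly f)
  (Hsep : separable_poly f)
  (E : fieldType) (iotaE : {rmorphism F -> E}) (thetaE : E)
  (HE : presents iotaE thetaE f)
  (* factorization of f over each F_i into monic irreducibles f_(i,b), b < nV i *)
  (nV : V -> nat) (fV : forall i, 'I_(nV i) -> {poly FV i})
  (HfV : forall i, map_poly (phi i) f = \prod_(b < nV i) fV i b)
  (HfVirr : forall i b, fV i b \is monic /\ irreducible_poly (fV i b))
  (* factorization of f over each F_k into monic irreducibles f_(k,a), a < nE k *)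
  (nE : Ed -> nat) (fE : forall k, 'I_(nE k) -> {poly FE k})
  (HfE : forall k, map_poly (jl k \o phi (l k)) f = \prod_(a < nE k) fE k a)
  (HfEirr : forall k a, fE k a \is monic /\ irreducible_poly (fE k a))
  (* E_(i,b) = F_i[X]/(f_(i,b)) and E_(k,a) = F_k[X]/(f_(k,a)) *)
  (EV : forall i, 'I_(nV i) -> fieldType)
  (iotaV : forall i b, {rmorphism FV i -> EV i b}) (thetaV : forall i b, EV i b)
  (HEV : forall i b, presents (iotaV i b) (thetaV i b) (fV i b))
  (EE : forall k, 'I_(nE k) -> fieldType)
  (iotaEE : forall k a, {rmorphism FE k -> EE k a}) (thetaEE : forall k a, EE k a)
  (HEE : forall k a, presents (iotaEE k a) (thetaEE k a) (fE k a)) :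
  (* Gamma': the edge (k,a) is incident to (l k, bl k a) and (r k, br k a),
     and to no other vertex *)
  exists (bl : forall k, 'I_(nE k) -> 'I_(nV (l k)))
         (br : forall k, 'I_(nE k) -> 'I_(nV (r k))),
    (forall k a (b : 'I_(nV (l k))),
        fE k a %| map_poly (jl k) (fV (l k) b) <-> b = bl k a) /\
    (forall k a (b : 'I_(nV (r k))),
        fE k a %| map_poly (jr k) (fV (r k) b) <-> b = br k a) /\
    (* the inclusions E_(i',) -> E_(k') extending F_i -> F_k, X |-> X *)
    exists (kl : forall k a, {rmorphism EV (l k) (bl k a) -> EE k a})
           (kr : forall k a, {rmorphism EV (r k) (br k a) -> EE k a})
           (rho : forall i b, {rmorphism E -> EV i b}),
      (forall k a x, kl k a (iotaV (l k) (bl k a) x) = iotaEE k a (jl k x)) /\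
      (forall k a, kl k a (thetaV (l k) (bl k a)) = thetaEE k a) /\
      (forall k a x, kr k a (iotaV (r k) (br k a) x) = iotaEE k a (jr k x)) /\
      (forall k a, kr k a (thetaV (r k) (br k a)) = thetaEE k a) /\
      (forall i b x, rho i b (iotaE x) = iotaV i b (phi i x)) /\
      (forall i b, rho i b thetaE = thetaV i b) /\
      (* E is a factorization inverse system with inverse limit E *)
      @is_FIS {i : V & 'I_(nV i)} {k : Ed & 'I_(nE k)}
        (fun k' => Tagged (fun i => 'I_(nV i)) (bl (tag k') (tagged k')))
        (fun k' => Tagged (fun i => 'I_(nV i)) (br (tag k') (tagged k')))
        (fun i' => EV (tag i') (tagged i'))
        (fun k' => EE (tag k') (tagged k'))
        (fun k' => kl (tag k') (tagged k'))
        (fun k' => kr (tag k') (tagged k'))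
        E (fun i' => rho (tag i') (tagged i')) /\
      (* patching over F implies patching over E *)
      (patching jl jr ->
       @patching {i : V & 'I_(nV i)} {k : Ed & 'I_(nE k)}
        (fun k' => Tagged (fun i => 'I_(nV i)) (bl (tag k') (tagged k')))
        (fun k' => Tagged (fun i => 'I_(nV i)) (br (tag k') (tagged k')))
        (fun i' => EV (tag i') (tagged i'))
        (fun k' => EE (tag k') (tagged k'))
        (fun k' => kl (tag k') (tagged k'))
        (fun k' => kr (tag k') (tagged k'))).
Proof.
have [d' hf] : exists d', size f = d'.+2.
  case: Hirr => h _; exists (size f).-2; move: h; case: (size f) => [|[|m]] //.
exact: (main_sec V Ed l r FV FE jl jr F phi HFIS f Hirr Hsep E iotaE thetaE HE
  nV fV HfV nE fE HfE HfEirr EV iotaV thetaV HEV EE iotaEE thetaEE HEE d' hf).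
Qed.
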